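(* Let $V$ be a locally convex topological real vector space, $C$ a cone in $V$ and $X$ a convex subset of $V$. (1) If $X$ is $C$-upward, then $\operatorname{qri}(X)$ is $C$-upward. (2) If $X$ is $C$-downward, then $\operatorname{qri}(X)$ is $C$-downward.
   Context: A cone in $V$ is a subset $C$ with $\lambda C\subseteq C$ for all $\lambda>0$ (possibly empty, need not contain $0$). $S$ is $C$-upward iff $S+C\subseteq S$; $C$-downward iff $S-C\subseteq S$. For a convex $Z\subseteq V$, with $\operatorname{cone}(A)=\{\lambda a:\lambda\ge0,a\in A\}$, the quasi-relative interior is $\operatorname{qri}(Z)=\{z\in Z:\operatorname{cl}(\operatorname{cone}(Z-z))\text{ is a linear subspace of }V\}$. *)

(* Defs.v *)
From HB Require Import structures.
From mathcomp Require Import all_boot all_order all_algebra.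
From mathcomp Require Import all_classical all_reals all_analysis.
Set Implicit Arguments. Unset Strict Implicit. Unset Printing Implicit Defensive.
Import Order.TTheory GRing.Theory Num.Theory.
Local Open Scope classical_set_scope.
Local Open Scope ring_scope.

(* A cone: lambda C ⊆ C for all lambda > 0 (may be empty, need not contain 0). *)
Definition is_cone (R : realType) (V : lmodType R) (C : set V) : Prop :=
  forall (l : R) (c : V), 0 < l -> C c -> C (l *: c).

Definition upward (R : realType) (V : lmodType R) (C S : set V) : Prop :=
  forall s c, S s -> C c -> S (s + c).

Definition downward (R : realType) (V : lmodType R) (C S : set V) : Prop :=
  forall s c, S s -> C c -> S (s - c).

Definition cone_hull (R : realType) (V : lmodType R) (A : set V) : set V :=
  [set x | exists l : R, exists2 a, A a & 0 <= l /\ x = l *: a].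

Definition is_subspace (R : realType) (V : lmodType R) (S : set V) : Prop :=
  S 0 /\ (forall x y, S x -> S y -> S (x + y)) /\
  (forall (a : R) x, S x -> S (a *: x)).

Definition translate_set (R : realType) (V : lmodType R) (Z : set V) (z : V) : set V :=
  [set x | exists2 w, Z w & x = w - z].

Definition qri (R : realType) (V : tvsType R) (Z : set V) : set V :=
  [set z | Z z /\ is_subspace (closure (cone_hull (translate_set Z z)))].

(* Main.v *)
Require Import Defs.
From HB Require Import structures.
From mathcomp Require Import all_boot all_order all_algebra.
From mathcomp Require Import all_classical all_reals all_analysis.
Import GRing.Theory.
Local Open Scope classical_set_scope.
Local Open Scope ring_scope.

Lemma qri_shift (R : realType) (V : tvsType R) (X : set V) (z z' : V) :
  qri X z -> X z' ->
  (forall w, X w -> exists2 w', X w' & w - z = w' - z') ->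
  qri X z'.
Proof.
move=> [Xz]; rewrite /is_subspace => -[L0 [LD LZ]] Xz' Hsh; split => //.
set L := closure (cone_hull (translate_set X z)).
have XL : forall w, X w -> L (w - z).
  move=> w Xw; apply: subset_closure; exists 1; exists (w - z).
    by exists w.
  by split=> //; rewrite scale1r.
have Ld : L (z' - z) by exact: XL.
suff -> : closure (cone_hull (translate_set X z')) = L by split.
apply/seteqP; split.
- rewrite [X in _ `<=` X](closure_id _).1; last exact: closed_closure.
  apply: closureS => x [l [y [w Xw ->] [l0 ->]]].
  apply: (LZ).
  have -> : w - z' = (w - z) + (- 1) *: (z' - z).
    by rewrite scaleN1r opprB addrA subrK.
  apply: (LD); first exact: XL.
  exact: LZ.
- apply: closureS => x [l [y [w Xw ->] [l0 ->]]].
  have [w' Xw' ->] := Hsh w Xw.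
  exists l => //; exists (w' - z') => //; by exists w'.
Qed.

Theorem lemma8 (R : realType) (V : tvsType R) (C X : set V) :
  is_cone C -> convex_set (X : set (convex_lmodType V)) ->
  (upward C X -> upward C (qri X)) /\
  (downward C X -> downward C (qri X)).
Proof.
move=> _ _; split.
- move=> up s c qs Cc; apply: (@qri_shift _ _ _ s _ qs).
    by apply: up => //; case: qs.
  move=> w Xw; exists (w + c); first exact: up.
  by rewrite (addrC s c) addrKA.
- move=> dn s c qs Cc; apply: (@qri_shift _ _ _ s _ qs).
    by apply: dn => //; case: qs.
  move=> w Xw; exists (w - c); first exact: dn.
  by rewrite opprB addrA subrK.
Qed.
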